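(* For integers $0\le m\le n$, $$\sum_{j=0}^{n-m}(-2)^{-j}\binom{n-m+j}{j}\binom{2n}{n+m+j}=2^{m-n}\binom{n}{m}\frac{\binom{2n}{n}}{\binom{2m}{m}}.$$ *)

(* Defs.v *)
From mathcomp Require Import all_boot all_algebra.

(* Main.v *)
Require Import Defs.
From mathcomp Require Import all_boot all_algebra.
From mathcomp Require Import ring lra zify.
Import GRing.Theory Num.Theory.
Local Open Scope ring_scope.
Lemma natq_eq {a b : nat} : a = b -> (a%:R : rat) = b%:R.
Proof. by move=> ->. Qed.

Lemma E1 (N p : nat) :
  (p.+1 * 'C(N.+1, p.+1) + p * 'C(N.+1, p) = N.+1 * 'C(N.+1, p))%N.
Proof.
rewrite mul_bin_left; case: (leqP p N.+1) => hp.
  by rewrite -mulnDl subnK.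
by rewrite bin_small // !muln0.
Qed.

Lemma E2 (N p : nat) :
  (N.+1 * 'C(N, p.+1) + p.+1 * 'C(N.+1, p.+1) = N.+1 * 'C(N.+1, p.+1))%N.
Proof.
have := mul_bin_down N.+1 p.+1; rewrite /= => ->.
case: (leqP p.+1 N.+1) => hp.
  by rewrite -mulnDl subnK.
by rewrite (bin_small hp) !muln0.
Qed.

Lemma core (N p j : nat) :
  ((N.+1)%:R - 2 * (p.+1 + j)%:R) * ('C(N.+2, p.+1))%:R - (N.+1)%:R * ('C(N, p.+1))%:R
  = - (2 * j%:R) * ('C(N.+1, p.+1))%:R - (p.+1 + j + j).+1%:R * ('C(N.+1, p))%:R :> rat.
Proof.
have h1 := natq_eq (E1 N p). have h2 := natq_eq (E2 N p).
rewrite binS.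
apply/eqP; rewrite -subr_eq0; apply/eqP.
transitivity (- (((N.+1 * 'C(N, p.+1) + p.+1 * 'C(N.+1, p.+1))%N%:R : rat) - (N.+1 * 'C(N.+1, p.+1))%N%:R)
   - (((p.+1 * 'C(N.+1, p.+1) + p * 'C(N.+1, p))%N%:R : rat) - (N.+1 * 'C(N.+1, p))%N%:R)).
  rewrite !natrD !natrM !natrD. ring.
by rewrite h1 h2 !subrr; ring.
Qed.
Definition c (k j : nat) : rat := (-2 : rat) ^- j * ('C(k + j, j))%:R.
Definition S (k N : nat) : rat := \sum_(j < k.+1) c k j * ('C(N, k - j))%:R.
Definition T (k N j : nat) : rat :=
  c k j * (((N.+1)%:R - 2 * k%:R) * ('C(N.+2, k - j))%:R - (N.+1)%:R * ('C(N, k - j))%:R).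
Definition H (k N j : nat) : rat := - (2 * j%:R) * c k j * ('C(N.+1, k - j))%:R.

Lemma step N p j : T (p.+1 + j) N j = H (p.+1 + j) N j - H (p.+1 + j) N j.+1.
Proof.
rewrite /T /H /c.
have -> : (p.+1 + j - j = p.+1)%N by lia.
have -> : (p.+1 + j - j.+1 = p)%N by lia.
rewrite core.
have hd := natq_eq (mul_bin_diag (p.+1 + j + j).+1 j).
rewrite /= in hd.
have -> : (p.+1 + j + j.+1 = (p.+1 + j + j).+1)%N by lia.
rewrite -[(j.+1)%:R]/(j.+1%:R) .
set u := (-2 : rat) ^- j.
have hu : (-2 : rat) ^- j.+1 = u * (-2)^-1 by rewrite exprSr invfM.
rewrite hu.
set v := ('C(p.+1 + j + j, j))%:R : rat.
set V := ('C((p.+1 + j + j).+1, j.+1))%:R : rat.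
have hd' : (p.+1 + j + j).+1%:R * v = (j.+1)%:R * V by rewrite -!natrM.
set w := ('C(N.+1, p.+1))%:R : rat. set x := ('C(N.+1, p))%:R : rat.
have h2 : (-2 : rat) * (-2)^-1 = 1 by rewrite mulfV.
transitivity (u * v * (- (2 * j%:R) * w) - u * ((p.+1 + j + j).+1%:R * v) * x).
  ring.
rewrite hd'.
by field.
Qed.

Lemma sumT k N : \sum_(j < k.+1) T k N j = 0.
Proof.
rewrite big_ord_recr /=.
have -> : \sum_(j < k) T k N j = - H k N k - (- H k N 0).
  rewrite -(big_mkord xpredT (T k N)).
  apply: (@telescope_sumr_eq _ 0 k (fun j => - H k N j)) => // j /andP[_ hj].
  have ek : k = ((k - j.+1).+1 + j)%N by lia.
  move: (step N (k - j.+1) j); rewrite -ek => ->.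
  by rewrite opprK addrC.
rewrite /T /H subnn !bin0.
ring.
Qed.

Lemma Srec k N : ((N.+1)%:R - 2 * k%:R) * S k N.+2 = (N.+1)%:R * S k N.
Proof.
apply/eqP; rewrite -subr_eq0; apply/eqP.
rewrite /S !mulr_sumr -sumrB -[RHS](sumT k N).
apply: eq_bigr => j _; rewrite /T; ring.
Qed.

Lemma natrS (n : nat) : (n.+1)%:R = n%:R + 1 :> rat.
Proof. by rewrite natr1. Qed.

Definition Rp (k n : nat) : rat :=
  \prod_(i < k) ((2 * n%:R - 1 - 2 * i%:R) / (i.+1)%:R).

Lemma Rrec k n : (((2 * n).+1)%:R - 2 * k%:R) * Rp k n.+1 = ((2 * n).+1)%:R * Rp k n.
Proof.
elim: k => [|k IH]; first by rewrite /Rp !big_ord0; ring.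
rewrite /Rp !big_ord_recr /= -/(Rp k n.+1) -/(Rp k n).
transitivity ((((2 * n).+1)%:R - 2 * k%:R - 2) / (k.+1)%:R *
   ((((2 * n).+1)%:R - 2 * k%:R) * Rp k n.+1)).
  rewrite !natrS !natrM; ring.
rewrite IH !natrS !natrM; ring.
Qed.

Lemma nz_odd n k : ((2 * n).+1)%:R - 2 * k%:R != 0 :> rat.
Proof.
rewrite subr_eq0; apply/negP => /eqP h.
have : ((2 * n).+1 = 2 * k)%N by apply/eqP; rewrite -(eqr_nat rat) natrM h.
lia.
Qed.

Lemma central (k : nat) :
  ((k.+1)%:R * ('C((2 * k).+2, k.+1))%:R = 2 * ((2 * k).+1)%:R * ('C(2 * k, k))%:R :> rat).
Proof.
have h1 := natq_eq (mul_bin_diag (2 * k).+2 k).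
have h2 := natq_eq (mul_bin_diag (2 * k).+1 k).
have h3 : 'C((2 * k).+1, k.+1) = 'C((2 * k).+1, k).
  have -> : (k.+1 = (2*k).+1 - k)%N by lia.
  rewrite bin_sub //; lia.
rewrite /= h3 in h2 h1.
rewrite !natrM in h1 h2.
rewrite -h1 -mulrA h2 !natrS; ring.
Qed.

Lemma base k : S k 0 = Rp k 0.
Proof.
rewrite /S big_ord_recr /= big1; last first.
  move=> [j hj] _ /=; have hkj : (k - j != 0)%N by lia.
  rewrite bin0n (negbTE hkj) /=; exact: mulr0.
rewrite add0r subnn bin0 mulr1 /c /Rp.
elim: k => [|k IH]; first by rewrite big_ord0 expr0 invr1 mul1r.
rewrite big_ord_recr /= -IH.
have hc := central k.
have -> : (k.+1 + k.+1 = (2 * k).+2)%N by lia.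
have -> : (k + k = 2 * k)%N by lia.
have hk : (k.+1)%:R != 0 :> rat by rewrite pnatr_eq0.
set Y := ('C((2 * k).+2, k.+1))%:R : rat in hc *.
have -> : Y = 2 * ((2 * k).+1)%:R * ('C(2 * k, k))%:R / (k.+1)%:R.
  by rewrite -hc mulrAC divff ?mul1r.
move: hk; rewrite exprSr invfM !natrS !natrM => hk.
field; rewrite hk /= expf_neq0 //.
Qed.

Lemma SR k n : S k (2 * n) = Rp k n.
Proof.
elim: n => [|n IH]; first by rewrite muln0 base.
apply: (mulfI (nz_odd n k)).
have -> : (2 * n.+1 = (2 * n).+2)%N by lia.
by rewrite Srec Rrec IH.
Qed.

Lemma closed m k : Rp k (m + k) =
  (2 : rat)^-1 ^+ k * ('C(m + k, m))%:R
      * (('C(2 * (m + k), m + k))%:R / ('C(2 * m, m))%:R).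
Proof.
elim: k m => [|k IH] m.
  rewrite /Rp big_ord0 addn0 binn expr0 mul1r divff //.
  by rewrite pnatr_eq0 -lt0n bin_gt0; lia.
rewrite /Rp big_ord_recr /= -/(Rp k (m + k.+1)).
have -> : (m + k.+1 = m.+1 + k)%N by lia.
rewrite IH.
have hc := central m.
have hA := natq_eq (mul_bin_left (m.+1 + k) m).
rewrite natrM natrM in hA.
rewrite (_ : (m.+1 + k - m = k.+1)%N) in hA; last by lia.
have hZ : ('C(2 * m, m))%:R != 0 :> rat by rewrite pnatr_eq0 -lt0n bin_gt0; lia.
have hm : (m.+1)%:R != 0 :> rat by rewrite pnatr_eq0.
have hk : (k.+1)%:R != 0 :> rat by rewrite pnatr_eq0.
have -> : ('C(m.+1 + k, m.+1))%:R = (k.+1)%:R * ('C(m.+1 + k, m))%:R / (m.+1)%:R :> rat.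
  by rewrite -hA mulrAC divff ?mul1r.
have -> : (2 * m.+1 = (2 * m).+2)%N by lia.
have -> : ('C((2 * m).+2, m.+1))%:R = 2 * ((2 * m).+1)%:R * ('C(2 * m, m))%:R / (m.+1)%:R :> rat.
  by rewrite -hc mulrAC divff ?mul1r.
have hodd : ((2 * m).+1)%:R != 0 :> rat by rewrite pnatr_eq0.
rewrite exprSr.
move: hm hk hodd hZ; rewrite !natrS !natrM !natrD !natrS => hm hk hodd hZ.
field; rewrite hZ hk hm /=.
have h0 : (0:rat) <= m%:R by exact: ler0n.
have : (0:rat) < 2 * m%:R + 1 by lra.
by move/lt0r_neq0.
Qed.

(* Identity over the rationals; 2^(m-n) written as (1/2)^(n-m) since m <= n. *)
Theorem lemma4 (m n : nat) (hmn : (m <= n)%N) :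
  \sum_(0 <= j < (n - m).+1)
     ((-2 : rat) ^- j) * ('C((n - m + j)%N, j))%:R * ('C(2 * n, (n + m + j)%N))%:R
  = (2 : rat)^-1 ^+ (n - m) * ('C(n, m))%:R
      * (('C(2 * n, n))%:R / ('C(2 * m, m))%:R).
Proof.
have [k ek] : exists k, n = (m + k)%N by exists (n - m)%N; lia.
subst n; rewrite addKn -closed -SR /S big_mkord.
apply: eq_bigr => j _; rewrite /c.
have hj := ltn_ord j.
have -> : (m + k + m + j = 2 * (m + k) - (k - j))%N by lia.
rewrite bin_sub //; lia.
Qed.
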